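(* Let $L\subseteq\Sigma^*$ be a regular language with syntactic ordered monoid $(M,\le)$, let $G\subseteq M$ be a generating set and $eval:G^*\to M$ the natural evaluation morphism. If one of the following holds, then $L\notin Pol(\mathcal{C}om)(\Sigma)$: (1) there exist $u,v,w_1,w_2\in G^*$ with $u=w_1w_2$, $v$ a shuffle of $w_1$ and $w_2$, $eval(u)$ idempotent and $eval(uvu)\not\le eval(u)$; (2) $M$ is divided by a non-commutative group; (3) $M$ is a $T_q$ monoid for some $q>1$. In particular, if $M$ is a $T_q$ monoid for some $q>1$ or is divided by one of $BA_2^+$, $U^+$ or a non-commutative group, then $L\notin Pol(\mathcal{C}om)(\Sigma)$.
   Context: Syntactic ordered monoid of $L\subseteq\Sigma^*$: write $x\preceq_L y$ if for all $u,v\in\Sigma^*$, $uyv\in L\Rightarrow uxv\in L$; the syntactic monoid $\Sigma^*/\equiv_L$ (with $x\equiv_L y$ iff $x\preceq_L y$ and $y\preceq_L x$) is ordered by $[x]\le[y]$ iff $x\preceq_L y$. $\mathcal{C}om(\Sigma)$ is the set of regular languages over $\Sigma$ whose syntactic monoid is commutative; $Pol(\mathcal{C}om)(\Sigma)$ is the set of finite unions of languages $L_0a_1L_1\cdots a_kL_k$ with $k\ge0$, $a_i\in\Sigma$, $L_i\in\mathcal{C}om(\Sigma)$. $v$ is a shuffle of $w_1,w_2$ if there are $k\ge0$ and words $w_{1,1},\dots,w_{1,k},w_{2,1},\dots,w_{2,k}$ (possibly empty) with $w_1=w_{1,1}\cdots w_{1,k}$, $w_2=w_{2,1}\cdots w_{2,k}$,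 $v=w_{1,1}w_{2,1}\cdots w_{1,k}w_{2,k}$. $M$ is a $T_q$ monoid if there exist idempotents $e,f\in M$ with $(ef)^qe=e$ and $(ef)^re\ne e$ for every positive integer $r$ not divisible by $q$. An ordered monoid $N$ divides $M$ if there is a surjective order-preserving monoid morphism from a submonoid of $M$ (restricted order) onto $N$; groups carry the equality order. $BA_2^+$ is the syntactic ordered monoid of $(ab)^*\subseteq\{a,b\}^*$; $U^+$ is the syntactic ordered monoid of the complement in $\{a,b\}^*$ of $(a\cup b)^*aa(a\cup b)^*$. *)

(* Defs.v *)
From HB Require Import structures.
From mathcomp Require Import all_boot all_fingroup.
From Stdlib Require List.

Set Implicit Arguments.
Unset Strict Implicit.
Unset Printing Implicit Defensive.

Definition lang (Sigma : Type) := seq Sigma -> Prop.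

Definition regular (Sigma : finType) (L : lang Sigma) : Prop :=
  exists (Q : finType) (d : Q -> Sigma -> Q) (q0 : Q) (F : pred Q),
    forall w, L w <-> F (foldl d q0 w).

Definition synt_le (Sigma : Type) (L : lang Sigma) (x y : seq Sigma) : Prop :=
  forall u v : seq Sigma, L (u ++ y ++ v) -> L (u ++ x ++ v).

(* An ordered monoid presented as a carrier with a multiplication, a unit and
   a preorder; two elements denote the same monoid element iff eqv holds. *)
Record omon := OMon {
  ocar : Type;
  omul : ocar -> ocar -> ocar;
  oone : ocar;
  ole : ocar -> ocar -> Prop }.

Definition oeqv (M : omon) (x y : ocar M) : Prop := ole x y /\ ole y x.

(* The syntactic ordered monoid of L: words modulo ==_L, ordered by <=_L. *)
Definition synt_omon (Sigma : Type) (L : lang Sigma) : omon :=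
  @OMon (seq Sigma) cat [::] (synt_le L).

Definition group_omon (gT : finGroupType) : omon :=
  @OMon gT (fun x y => (x * y)%g) 1%g (@eq gT).

Definition odivides (N M : omon) : Prop :=
  exists (S : ocar M -> Prop) (phi : ocar M -> ocar N),
    [/\ S (oone M),
        (forall x y, S x -> S y -> S (omul x y)),
        (forall x y, S x -> S y -> ole x y -> ole (phi x) (phi y)),
        oeqv (phi (oone M)) (oone N)
      & (forall x y, S x -> S y -> oeqv (phi (omul x y)) (omul (phi x) (phi y)))]
    /\ (forall n : ocar N, exists2 x, S x & oeqv (phi x) n).

Definition opow (M : omon) (x : ocar M) (n : nat) : ocar M :=
  iter n (omul x) (oone M).

Definition oidem (M : omon) (x : ocar M) : Prop := oeqv (omul x x) x.

Definition Tq_monoid (M : omon) (q : nat) : Prop :=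
  exists e f : ocar M,
    [/\ oidem e, oidem f,
        oeqv (omul (opow (omul e f) q) e) e
      & forall r : nat, 0 < r -> ~~ (q %| r) ->
          ~ oeqv (omul (opow (omul e f) r) e) e].

Definition Com (Sigma : finType) (K : lang Sigma) : Prop :=
  regular K /\ forall x y : seq Sigma, oeqv (M := synt_omon K) (x ++ y) (y ++ x).

(* Marked product L0 a1 L1 ... ak Lk, given L0 and the list [(a1,L1);...]. *)
Fixpoint mprod (Sigma : Type) (L0 : lang Sigma) (s : seq (Sigma * lang Sigma))
  : lang Sigma :=
  match s with
  | [::] => L0
  | (a, L1) :: s' => fun w => exists w0 w',
       w = w0 ++ a :: w' /\ L0 w0 /\ mprod L1 s' w'
  end.

Definition PolCom (Sigma : finType) (L : lang Sigma) : Prop :=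
  exists (n : nat) (L0 : 'I_n -> lang Sigma) (s : 'I_n -> seq (Sigma * lang Sigma)),
    (forall i, Com (L0 i) /\ List.Forall (fun p => Com p.2) (s i)) /\
    (forall w, L w <-> exists i, mprod (L0 i) (s i) w).

Definition shuffle (T : Type) (v w1 w2 : seq T) : Prop :=
  exists xs ys : seq (seq T),
    [/\ size xs = size ys, w1 = flatten xs, w2 = flatten ys
      & v = flatten (map (fun p => p.1 ++ p.2) (zip xs ys))].

(* Languages over {a,b}, encoded as bool with a = true, b = false. *)
Definition lang_abstar : lang bool :=
  fun w => exists n, w = flatten (nseq n [:: true; false]).
Definition lang_no_aa : lang bool :=
  fun w => ~ exists x y, w = x ++ [:: true; true] ++ y.

Definition BA2plus : omon := synt_omon lang_abstar.
Definition Uplus : omon := synt_omon lang_no_aa.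

(* Main.v *)
Require Import Defs.
From HB Require Import structures.
From mathcomp Require Import all_boot all_fingroup cyclic.
From Stdlib Require Import Classical Lia.
From Stdlib Require List.
Set Implicit Arguments. Unset Strict Implicit. Unset Printing Implicit Defensive.

Definition pw (T : Type) (z : seq T) n := flatten (nseq n z).

Lemma pwS T (z : seq T) n : pw z n.+1 = z ++ pw z n. Proof. by []. Qed.
Lemma pwD T (z : seq T) a b : pw z (a + b) = pw z a ++ pw z b.
Proof. by elim: a => // a IH; rewrite addSn !pwS IH catA. Qed.

Lemma split_lemma (T : Type) (A B w0 w' : seq T) c :
  w0 ++ c :: w' = A ++ B ->
  (size A <= size w0 -> exists z, w0 = A ++ z /\ B = z ++ c :: w') /\
  (size w0 < size A -> exists p', A = w0 ++ c :: p' /\ w' = p' ++ B).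
Proof.
elim: A w0 => [|a A IH] w0 /= E.
  by split=> // _; exists w0.
case: w0 E => [|b w0] /= E.
  case: E => -> ->; split=> // _; by exists A.
case: E => <- E; have [H1 H2] := IH _ E; split.
  by move=> Hs; have [z [-> ->]] := H1 Hs; exists z.
by move=> Hs; have [p' [-> ->]] := H2 Hs; exists p'.
Qed.

Lemma pwSr T (z : seq T) n : pw z n.+1 = pw z n ++ z.
Proof. by rewrite -addn1 pwD /pw /= cats0. Qed.

Section Synt.
Variable Sigma : finType.
Variable L : lang Sigma.
Notation le := (synt_le L).
Notation eqv := (oeqv (M := synt_omon L)).

Lemma le_refl x : le x x. Proof. by move=> u v. Qed.
Lemma le_trans x y z : le x y -> le y z -> le x z.
Proof. move=> Hxy Hyz u v H. exact: Hxy (Hyz _ _ H). Qed.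
Lemma le_cat a b c d : le a b -> le c d -> le (a ++ c) (b ++ d).
Proof.
move=> Hab Hcd u v H.
have H1 := Hab u (d ++ v); rewrite !catA in H1 H *.
have H2 := Hcd (u ++ a) v; rewrite !catA in H2.
by apply: H2; apply: H1.
Qed.
Lemma eqv_refl x : eqv x x. Proof. by split; apply: le_refl. Qed.
Lemma eqv_sym x y : eqv x y -> eqv y x. Proof. by move=> [H1 H2]; split. Qed.
Lemma eqv_trans x y z : eqv x y -> eqv y z -> eqv x z.
Proof. move=> [H1 H2] [H3 H4]; split; [exact: le_trans H1 H3|exact: le_trans H4 H2]. Qed.
Lemma eqv_cat a b c d : eqv a b -> eqv c d -> eqv (a ++ c) (b ++ d).
Proof. move=> [H1 H2] [H3 H4]; split; exact: le_cat. Qed.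

Lemma pw_idem x n : eqv (x ++ x) x -> eqv (pw x n.+1) x.
Proof.
move=> Hi; elim: n => [|n IH]; first by rewrite /pw /= cats0; apply: eqv_refl.
rewrite pwS; apply: eqv_trans (eqv_cat (eqv_refl x) IH) Hi.
Qed.


Definition PI (K : lang Sigma) := forall w w', perm_eq w w' -> K w -> K w'.

Lemma Com_PI K : Com K -> PI K.
Proof.
move=> [_ Hc].
suff H: forall w w', perm_eq w w' -> forall p q, K (p ++ w ++ q) -> K (p ++ w' ++ q).
  by move=> w w' Hp Hk; have := H w w' Hp [::] [::]; rewrite /= !cats0; apply.
elim=> [|c w IH] w' Hp p q.
  by move: (perm_size Hp); case: w' {Hp}.
have Hc' : c \in w' by rewrite -(perm_mem Hp) mem_head.
case/splitPr: Hc' Hp => u v Hp.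
have Hp2 : perm_eq w (u ++ v).
  rewrite -(perm_cons c); apply: perm_trans Hp _.
  by rewrite -cat1s perm_catCA.
move=> Hk.
have Hk2 : K ((p ++ [:: c]) ++ (u ++ v) ++ q).
  by apply: IH => //; rewrite -catA.
have [Hsw _] := Hc u [:: c].
have := Hsw p (v ++ q).
rewrite -!catA /= in Hk2 *; apply.
by [].
Qed.

Variables (x y : seq Sigma).
Hypothesis Hxy : perm_eq x y.

Lemma mprodA (s : seq (Sigma * lang Sigma)) : forall L0 p q N,
  PI L0 -> List.Forall (fun p => PI p.2) s -> size s < N ->
  mprod L0 s (p ++ pw x N ++ q) ->
  exists a b, mprod L0 s (p ++ pw x a ++ y ++ pw x b ++ q).
Proof.
elim: s => [|[c L1] s IH] L0 p q [|N] // HL0 Hs HN.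
  move=> /= H; exists 0, N; apply: HL0 H.
  by rewrite perm_cat2l /= pwS -catA perm_cat2r.
move=> [w0 [w' [E [H0 H1]]]].
move: Hs => /List.Forall_cons_iff [HL1 Hs'].
have E' : w0 ++ c :: w' = (p ++ x) ++ (pw x N ++ q) by rewrite -E pwS !catA.
have [Hge Hlt] := split_lemma E'.
case: (leqP (size (p ++ x)) (size w0)) => Hsz.
  have [z [Ew0 Ez]] := Hge Hsz.
  exists 0, N => /=; exists (p ++ y ++ z), w'; split.
  - by rewrite Ez !catA.
  split=> //; apply: HL0 H0; by rewrite Ew0 -catA perm_cat2l perm_cat2r.
have [p' [Ep Ew']] := Hlt Hsz.
have H1' : mprod L1 s (p' ++ pw x N ++ q) by rewrite -Ew'.
have [a [b Hab]] := IH L1 p' q N HL1 Hs' HN H1'.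
exists a.+1, b => /=; exists w0, (p' ++ pw x a ++ y ++ pw x b ++ q); split=> //.
by rewrite pwS -(catA x) catA Ep -catA.
Qed.

End Synt.

Lemma Key (Sigma : finType) (L : lang Sigma) : PolCom L ->
  forall x y, perm_eq x y -> oeqv (M := synt_omon L) (x ++ x) x ->
  synt_le L (x ++ y ++ x) x.
Proof.
move=> [n [L0 [s [Hc Hiff]]]] x y Hxy Hid u v Hu.
set K := \max_(i < n) size (s i).
have [H1 _] := pw_idem K.+2 Hid.
have Hw := H1 u v Hu.
have : L ((u ++ x) ++ pw x K.+1 ++ (x ++ v)).
  have E : pw x K.+3 = x ++ pw x K.+1 ++ x.
    have -> : K.+3 = 1 + (K.+1 + 1) by rewrite addn1 add1n.
    by rewrite (pwD x 1) pwD /pw /= !cats0.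
  by move: Hw; rewrite E !catA.
move=> /Hiff [i Hi].
have [HL0 Hs] := Hc i.
have Hs' : List.Forall (fun p => PI p.2) (s i).
  by apply: List.Forall_impl Hs => pr; apply: Com_PI.
have Hsz : size (s i) < K.+1 by rewrite ltnS; apply: (leq_bigmax_cond (F := fun i => size (s i))).
have [a [b Hab]] := mprodA Hxy (Com_PI HL0) Hs' Hsz Hi.
have HL : L (u ++ pw x a.+1 ++ y ++ pw x b.+1 ++ v).
  by apply/Hiff; exists i; move: Hab; rewrite (pwSr x b) (pwS x a) !catA.
have [_ Ha] := pw_idem a Hid.
have [_ Hb] := pw_idem b Hid.
have H2 := Ha u (y ++ pw x b.+1 ++ v) HL.
have := Hb (u ++ x ++ y) v; rewrite !catA in H2 *; exact.
Qed.

Lemma idem_exp (Sigma : finType) (L : lang Sigma) : regular L ->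
  forall z d, 0 < d -> exists m, [/\ 0 < m, d %| m &
     oeqv (M := synt_omon L) (pw z m ++ pw z m) (pw z m)].
Proof.
move=> [Q [dl [q0 [F HF]]]] z d Hd.
pose tr w : {ffun Q -> Q} := [ffun q => foldl dl q w].
have tr_le : forall a b, tr a = tr b -> synt_le L a b.
  move=> a b Eab u v /HF H; apply/HF; move: H; rewrite !foldl_cat.
  by have := congr1 (fun f : {ffun Q -> Q} => f (foldl dl q0 u)) Eab; rewrite !ffunE => ->.
have tr_cat : forall a a' b, tr a = tr a' -> tr (a ++ b) = tr (a' ++ b).
  move=> a a' b E; apply/ffunP=> q; rewrite !ffunE !foldl_cat.
  by have := congr1 (fun f : {ffun Q -> Q} => f q) E; rewrite !ffunE => ->.
pose f (i : 'I_(#|{ffun Q -> Q}|.+1)) := tr (pw z i).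
have [i [j [Hij Eij]]] : exists i j : nat, i < j /\ tr (pw z i) = tr (pw z j).
  apply: NNPP => Hn.
  have Hinj : injective f.
    move=> i j Efij; apply/eqP; apply: contraT => Hne.
    case: (ltngtP i j) => H.
    - by exfalso; apply: Hn; exists i, j.
    - by exfalso; apply: Hn; exists j, i.
    - by move: Hne; rewrite (val_inj H) eqxx.
  by have := leq_card f Hinj; rewrite !card_ord ltnn.
set p := j - i.
have Hp : 0 < p by rewrite subn_gt0.
have Hper : forall n, i <= n -> tr (pw z (n + p)) = tr (pw z n).
  move=> n Hn.
  have -> : n + p = j + (n - i).
    rewrite /p; move/leP: Hn => Hn; move/ltP: Hij => Hij; rewrite -!plusE -!minusE; lia.
  rewrite -{2}(subnKC Hn) !pwD; exact: tr_cat (esym Eij).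
have Hper2 : forall t n, i <= n -> tr (pw z (n + p * t)) = tr (pw z n).
  elim=> [|t IH] n Hn; first by rewrite muln0 addn0.
  rewrite mulnS addnCA addnC (Hper _ (leq_trans Hn (leq_addr _ _))).
  by rewrite IH.
exists (p * i.+1 * d); split.
- by rewrite !muln_gt0 Hp Hd.
- exact: dvdn_mull (dvdnn d).
have Him : i <= p * i.+1 * d.
  apply: (@leq_trans i.+1) => //.
  exact: leq_trans (leq_pmull _ Hp) (leq_pmulr _ Hd).
have E := Hper2 (i.+1 * d) _ Him.
rewrite -mulnA in E Him *.
by split; apply: tr_le; rewrite -pwD ?E.
Qed.

Definition AB := [:: true; false].

Lemma abstar_in m : lang_abstar (pw AB m). Proof. by exists m. Qed.

Lemma abstar_out m R : ~ lang_abstar (pw AB m ++ false :: R).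
Proof.
move=> [n]; rewrite -/(pw AB n).
elim: m n => [|m IH] [|n] //=.
by rewrite !pwS /= => [[]] /IH.
Qed.

Lemma noaa_in m : lang_no_aa (pw AB m).
Proof.
elim: m => [|m IH] [x [y E]].
  by case: x E.
rewrite pwS in E.
case: x E => [|c1 [|c2 x]] //= [E1 E2 E3].
by apply: IH; exists x, y.
Qed.

Lemma noaa_out m k : 0 < m ->
  ~ lang_no_aa (pw AB m ++ false :: true :: (pw AB k ++ pw AB m)).
Proof.
case: m => // m _ H; apply: H.
have [r Er] : exists r, pw AB k ++ pw AB m.+1 = true :: r.
  by case: k => [|k]; eexists.
exists (pw AB m.+1 ++ [:: false]), r.
by rewrite Er -catA.
Qed.

Lemma count_pw (T : eqType) (a : pred T) z n : count a (pw z n) = n * count a z.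
Proof. by elim: n => // n IH; rewrite pwS count_cat IH mulSn. Qed.

Lemma S_pw (T : Type) (S : seq T -> Prop) z n : S [::] ->
  (forall x y, S x -> S y -> S (x ++ y)) -> S z -> S (pw z n).
Proof. by move=> S1 Sm Sz; elim: n => // n IH; rewrite pwS; apply: Sm. Qed.

Lemma div_core (Sigma : finType) (L : lang Sigma) (hL : regular L) (HP : PolCom L)
  (N : omon) (S : seq Sigma -> Prop) (phi : seq Sigma -> ocar N)
  (S1 : S [::]) (Sm : forall x y, S x -> S y -> S (x ++ y))
  (Sle : forall x y, S x -> S y -> synt_le L x y -> ole (phi x) (phi y))
  sa sb d : S sa -> S sb -> 0 < d ->
  exists m, [/\ 0 < m, d %| m &
    ole (phi (pw (sa ++ sb) m ++ ((sb ++ sa) ++ pw (sa ++ sb) m.-1) ++ pw (sa ++ sb) m))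
        (phi (pw (sa ++ sb) m))].
Proof.
move=> Sa Sb Hd.
have [m [Hm Hdm Hid]] := idem_exp hL (sa ++ sb) Hd.
exists m; split=> //.
have SZ := Sm _ _ Sa Sb.
have SX := S_pw m S1 Sm SZ.
have SY := Sm _ _ (Sm _ _ Sb Sa) (S_pw m.-1 S1 Sm SZ).
apply: Sle; [exact: Sm SX (Sm _ _ SY SX) | exact: SX |].
apply: Key => //.
case: m Hm {Hdm Hid SX SY} => // m _ /=.
by rewrite pwS perm_cat2r perm_catC.
Qed.

Lemma group_case (Sigma : finType) (L : lang Sigma) (hL : regular L) (HP : PolCom L)
  (gT : finGroupType) (a b : gT) : (a * b)%g <> (b * a)%g ->
  odivides (group_omon gT) (synt_omon L) -> False.
Proof.
move=> Hab [S [phi [[S1 Sm Sle [H1 _] Hmor] Hsurj]]].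
have phi_cat : forall x y, S x -> S y -> phi (x ++ y) = (phi x * phi y)%g.
  by move=> x y Sx Sy; case: (Hmor x y Sx Sy).
have phi_pw : forall z n, S z -> phi (pw z n) = (phi z ^+ n)%g.
  move=> z n Sz; elim: n => [|n IH] //.
  rewrite pwS phi_cat // ?IH ?expgS //; exact: S_pw.
have [sa Sa [Ea _]] := Hsurj a.
have [sb Sb [Eb _]] := Hsurj b.
have [m [Hm Hdm Hle]] := div_core hL HP S1 Sm Sle Sa Sb (cardG_gt0 [set: gT]).
simpl in Hle.
have SZ : S (sa ++ sb) by apply: Sm.
have SZ' : S (sb ++ sa) by apply: Sm.
have SX := S_pw m S1 Sm SZ.
have SX' := S_pw m.-1 S1 Sm SZ.
have SY := Sm _ _ SZ' SX'.
have SYX := Sm _ _ SY SX.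
rewrite !phi_cat ?phi_pw // in Hle.
rewrite !phi_cat // Ea Eb in Hle.
have Hpow : ((a * b) ^+ m)%g = 1%g.
  apply/eqP; rewrite -order_dvdn; apply: dvdn_trans Hdm.
  by apply: order_dvdG; rewrite in_setT.
rewrite Hpow mul1g mulg1 in Hle.
case: m Hm Hpow Hle {Hdm SX SX' SY SYX} => // m _ /= Hpow Hle.
apply: Hab; rewrite expgSr in Hpow.
rewrite -(mulg1 (b * a)%g) -Hpow !mulgA Hle mul1g //.
Qed.

Lemma ctx (T : Type) (K : lang T) a b : synt_le K a b -> K b -> K a.
Proof. by move=> H Hb; have := H [::] [::]; rewrite /= !cats0; apply. Qed.

Lemma eqv_pw (T : finType) (K : lang T) a b n :
  oeqv (M := synt_omon K) a b -> oeqv (M := synt_omon K) (pw a n) (pw b n).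
Proof.
move=> H; elim: n => [|n IH]; first exact: eqv_refl.
by rewrite !pwS; apply: eqv_cat.
Qed.

Lemma bau_case (Sigma : finType) (L : lang Sigma) (hL : regular L) (HP : PolCom L)
  (L' : lang bool) (Hin : forall m, L' (pw AB m))
  (Hout : forall m k, 0 < m -> ~ L' (pw AB m ++ false :: true :: (pw AB k ++ pw AB m))) :
  odivides (synt_omon L') (synt_omon L) -> False.
Proof.
move=> [S [phi [[S1 Sm Sle H1 Hmor] Hsurj]]].
have [sa Sa Ea] := Hsurj [:: true].
have [sb Sb Eb] := Hsurj [:: false].
have [m [Hm _ Hle]] := div_core hL HP S1 Sm Sle Sa Sb (ltn0Sn 0).
simpl in Hle.
have phi_pw : forall z n, S z -> oeqv (M := synt_omon L') (phi (pw z n)) (pw (phi z) n).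
  move=> z n Sz; elim: n => [|n IH]; first exact: H1.
  rewrite !pwS; apply: eqv_trans (Hmor _ _ Sz (S_pw n S1 Sm Sz)) _.
  exact: eqv_cat (eqv_refl _) IH.
have SZ := Sm _ _ Sa Sb.
have SZ' := Sm _ _ Sb Sa.
have SX := S_pw m S1 Sm SZ.
have SX' := S_pw m.-1 S1 Sm SZ.
have SY := Sm _ _ SZ' SX'.
have SYX := Sm _ _ SY SX.
have phiZ : oeqv (M := synt_omon L') (phi (sa ++ sb)) AB.
  exact: eqv_trans (Hmor _ _ Sa Sb) (eqv_cat Ea Eb).
have phiZ' : oeqv (M := synt_omon L') (phi (sb ++ sa)) [:: false; true].
  exact: eqv_trans (Hmor _ _ Sb Sa) (eqv_cat Eb Ea).
have phiX : forall n, oeqv (M := synt_omon L') (phi (pw (sa ++ sb) n)) (pw AB n).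
  by move=> n; apply: eqv_trans (phi_pw _ _ SZ) (eqv_pw _ phiZ).
have phiW : oeqv (M := synt_omon L')
   (phi (pw (sa ++ sb) m ++ ((sb ++ sa) ++ pw (sa ++ sb) m.-1) ++ pw (sa ++ sb) m))
   (pw AB m ++ ([:: false; true] ++ pw AB m.-1) ++ pw AB m).
  apply: eqv_trans (Hmor _ _ SX SYX) _; apply: eqv_cat (phiX m) _.
  apply: eqv_trans (Hmor _ _ SY SX) _; apply: eqv_cat _ (phiX m).
  apply: eqv_trans (Hmor _ _ SZ' SX') _; exact: eqv_cat phiZ' (phiX _).
have HX : L' (phi (pw (sa ++ sb) m)) by apply: ctx (proj1 (phiX m)) (Hin m).
have := ctx (proj2 phiW) (ctx Hle HX).
exact: Hout m m.-1 Hm.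
Qed.

Lemma tq_case (Sigma : finType) (L : lang Sigma) (HP : PolCom L) q :
  1 < q -> Tq_monoid (synt_omon L) q -> False.
Proof.
move=> Hq [e [f [He Hf Heq Hne]]].
have opw : forall z r, opow (M := synt_omon L) z r = pw z r.
  by move=> z; elim=> //= r ->.
rewrite /= opw in Heq.
have Hne' : forall r, 0 < r -> ~~ (q %| r) -> ~ oeqv (M := synt_omon L) (pw (e ++ f) r ++ e) e.
  by move=> r; rewrite -opw; apply: Hne.
simpl in He, Hf.
pose E r := pw (e ++ f) r ++ e.
have HeE : forall r, oeqv (M := synt_omon L) (e ++ E r) (E r).
  case=> [|r]; first exact: He.
  rewrite /E pwS -!catA catA; apply: eqv_cat He (eqv_refl _).
have HEE : forall a b, oeqv (M := synt_omon L) (E a ++ E b) (E (a + b)).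
  move=> a b; rewrite {1}/E -catA.
  by apply: eqv_trans (eqv_cat (eqv_refl _) (HeE b)) _; rewrite /E pwD catA; apply: eqv_refl.
case: q Hq Heq Hne' Hne => // q' Hq Heq Hne' _.
have Hx : oeqv (M := synt_omon L) (E q'.+1 ++ E q'.+1) (E q'.+1).
  exact: eqv_trans (eqv_cat Heq Heq) (eqv_trans He (eqv_sym Heq)).
have Hp : perm_eq (E q'.+1) (pw f q'.+1 ++ pw e q'.+2).
  apply/seq.permP => a; rewrite /E !count_cat !count_pw count_cat.
  rewrite -!plusE -!multE; nia.
have HK := Key HP Hp Hx.
have H1 : oeqv (M := synt_omon L) (E q'.+1 ++ (pw f q'.+1 ++ pw e q'.+2) ++ E q'.+1) (E 1).
  have H2 : oeqv (M := synt_omon L) (pw f q'.+1 ++ pw e q'.+2) (f ++ e).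
    exact: eqv_cat (pw_idem q' Hf) (pw_idem q'.+1 He).
  have H3 := eqv_cat Heq (eqv_cat H2 Heq).
  apply: eqv_trans H3 _.
  rewrite /E /pw /= cats0 -!catA.
  exact: eqv_cat (eqv_refl e) (eqv_cat (eqv_refl f) He).
have HE1 : synt_le L (E 1) (E 0).
  apply: le_trans (proj2 H1) _; apply: le_trans HK _; exact: proj1 Heq.
have Hstep : forall j, synt_le L (E j.+1) (E j).
  move=> j; apply: le_trans (proj2 (HEE 1 j)) _; apply: le_trans _ (proj1 (HeE j)).
  exact: (le_cat HE1 (@le_refl _ L (E j))).
have Hch : forall k, synt_le L (E k.+1) (E 1).
  elim=> [|k IH]; first exact: le_refl.
  exact: le_trans (Hstep _) IH.
apply: (Hne' 1) => //.
  by rewrite dvdn1 (gtn_eqF Hq).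
split; first exact: HE1.
exact: le_trans (proj2 Heq) (Hch q').
Qed.

Lemma shuffle_perm (I : Type) (Sigma : finType) (g : I -> seq Sigma) v w1 w2 :
  shuffle v w1 w2 -> perm_eq (flatten (map g (w1 ++ w2))) (flatten (map g v)).
Proof.
move=> [xs [ys [Hs -> -> ->]]].
elim: xs ys Hs => [|x xs IH] [|y ys] //= [Hs].
have := IH _ Hs; rewrite !map_cat !flatten_cat => H.
rewrite -!catA perm_cat2l perm_catCA perm_cat2l //.
Qed.

Theorem mainTheorem15 (Sigma : finType) (L : lang Sigma) (hL : regular L)
  (I : Type) (g : I -> seq Sigma)
  (hgen : forall x : seq Sigma, exists s : seq I,
            oeqv (M := synt_omon L) x (flatten (map g s))) :
  let M := synt_omon L in
  let eval := fun s : seq I => flatten (map g s) in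
  ( ( (exists u v w1 w2 : seq I,
         [/\ u = w1 ++ w2, shuffle v w1 w2,
             oidem (M := M) (eval u)
           & ~ ole (o := M) (eval (u ++ v ++ u)) (eval u)])
      \/ (exists gT : finGroupType,
            (exists a b : gT, (a * b)%g <> (b * a)%g) /\ odivides (group_omon gT) M)
      \/ (exists q, 1 < q /\ Tq_monoid M q) )
    -> ~ PolCom L )
  /\
  ( ( (exists q, 1 < q /\ Tq_monoid M q)
      \/ odivides BA2plus M \/ odivides Uplus M
      \/ (exists gT : finGroupType,
            (exists a b : gT, (a * b)%g <> (b * a)%g) /\ odivides (group_omon gT) M) )
    -> ~ PolCom L ).
Proof.
move=> M eval.
have Hgrp : (exists gT : finGroupType,
            (exists a b : gT, (a * b)%g <> (b * a)%g) /\ odivides (group_omon gT) M) -> ~ PolCom L.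
  by move=> [gT [[a [b Hab]] Hd]] HP; apply: (group_case hL HP Hab Hd).
have Htq : (exists q, 1 < q /\ Tq_monoid M q) -> ~ PolCom L.
  by move=> [q [Hq Ht]] HP; apply: (tq_case HP Hq Ht).
split.
  case=> [[u [v [w1 [w2 [Eu Hsh Hid Hn]]]]] | [/Hgrp // | /Htq //]] HP.
  apply: Hn; rewrite /eval /= !map_cat !flatten_cat.
  apply: (Key HP _ Hid).
  by rewrite Eu; apply: shuffle_perm.
case=> [/Htq // | [Hd | [Hd | /Hgrp //]]] HP.
- apply: (bau_case hL HP (L' := lang_abstar) abstar_in _ Hd).
  move=> m k _; exact: abstar_out.
- apply: (bau_case hL HP (L' := lang_no_aa) noaa_in _ Hd).
  move=> m k Hm; exact: noaa_out.
Qed.
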